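(* Let $R$ be a subring of $\mathbb{Q}$ and let $\Phi$ be a set of finite-rank-free-by-1 $R$-modules. Let $L$ and $G$ be torsion-free $R$-modules, both with nucleus $R$, such that $L$ is $\Phi$-complete and $G$ is $\Phi$-represented. Then $\mathrm{Ext}(G,L)=0$.
   Context: For a torsion-free group $X\neq0$, $\mathrm{nuc}\,X$ is the largest subring of $\mathbb{Q}$ over which $X$ is a module. Let $n\le\omega$. Let $B$ be the free $R$-module with basis $\{x_i:i<n\}\cup\{y_m:m\in\omega\}$, let $p_m\in R\setminus\{0\}$ and $k_{im}\in R$ with, for each $m$, $k_{im}=0$ for all but finitely many $i$, and let $N$ be the submodule generated by $y_{m+1}p_m-y_m-\sum_{i<n}x_ik_{im}$ $(m\in\omega)$. An $R$-module $G'$ is $n$-free-by-1 if $G'\cong B/N$ for such data, $G'$ is not free, and, if $n$ is finite, every $R$-submodule of $G'$ of rank $\le n$ is free; it is finite-rank-free-by-1 if it is $n$-free-by-1 for some finite $n$. $L$ is $\Phi$-complete if $\mathrm{Ext}(G',L)=0$ for all $G'\in\Phi$. $G$ is $\Phi$-represented if $G=\bigcup_{\alpha<\lambda}G_\alpha$ for an ascending continuous chain of $R$-submodules with $G_0=0$ and each $G_{\alpha+1}/G_\alpha$ isomorphic to a member of $\Phi$ or to a free $R$-module. *)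

(* Defs.v *)
(* Abelian groups are zmodTypes; R-modules (R a subring of Q)
   are zmodTypes with an explicit scalar action of the elements of R. *)
From HB Require Import structures.
From mathcomp Require Import all_boot all_order all_algebra.
Unset Strict Implicit. Unset Printing Implicit Defensive.
Import Order.TTheory GRing.Theory Num.Theory.
Local Open Scope ring_scope.

Definition is_subring_Q (R : rat -> Prop) : Prop :=
  R 1 /\ (forall r s, R r -> R s -> R (r - s)) /\ (forall r s, R r -> R s -> R (r * s)).

Definition is_Rmod_act (R : rat -> Prop) (M : zmodType) (act : rat -> M -> M) : Prop :=
  (forall r x y, R r -> act r (x + y) = act r x + act r y) /\
  (forall r s x, R r -> R s -> act (r + s) x = act r x + act s x) /\
  (forall r s x, R r -> R s -> act (r * s) x = act r (act s x)) /\
  (forall x, act 1 x = x).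

Record RMod (R : rat -> Prop) := {
  rm_car : zmodType;
  rm_act : rat -> rm_car -> rm_car;
  rm_ax : is_Rmod_act R rm_car rm_act }.
Arguments rm_car {R}.
Arguments rm_act {R}.

Definition torsion_free (M : zmodType) : Prop :=
  forall (x : M) (n : nat), x *+ n.+1 = 0 -> x = 0.

Definition has_nucleus (R : rat -> Prop) (M : zmodType) : Prop :=
  (exists x : M, x <> 0) /\
  (exists act : rat -> M -> M, is_Rmod_act R M act) /\
  (forall S : rat -> Prop, is_subring_Q S ->
     (exists act : rat -> M -> M, is_Rmod_act S M act) -> forall r, S r -> R r).

Definition is_submod R (M : RMod R) (S : rm_car M -> Prop) : Prop :=
  S 0 /\ (forall x y, S x -> S y -> S (x + y)) /\
  (forall r x, R r -> S x -> S (rm_act M r x)).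

Definition lincomb R (M : RMod R) (l : seq (rm_car M * rat)) : rm_car M :=
  \sum_(p <- l) rm_act M p.2 p.1.

Definition free_on R (M : RMod R) (S : rm_car M -> Prop) : Prop :=
  exists Bs : rm_car M -> Prop,
    (forall b, Bs b -> S b) /\
    (forall x, S x -> exists l : seq (rm_car M * rat),
        (forall p, p \in l -> Bs p.1 /\ R p.2) /\ x = lincomb R M l) /\
    (forall l : seq (rm_car M * rat),
        (forall p, p \in l -> Bs p.1 /\ R p.2) -> uniq (map fst l) ->
        lincomb R M l = 0 -> forall p, p \in l -> p.2 = 0).

Definition free_Rmod R (M : RMod R) : Prop := free_on R M (fun _ : rm_car M => True).

Definition rank_le R (M : RMod R) (n : nat) (S : rm_car M -> Prop) : Prop :=
  forall v : 'I_n.+1 -> rm_car M, (forall i, S (v i)) ->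
    exists c : 'I_n.+1 -> int, (exists i, c i != 0) /\ \sum_i (v i *~ c i) = 0.

(* Membership in N of the element sum_i x_i c_i + sum_j y_j d_j of B,
   N generated by y_{m+1} p_m - y_m - sum_i x_i k_{im}. *)
Definition in_N (R : rat -> Prop) (n : nat) (p : nat -> rat) (k : 'I_n -> nat -> rat)
    (c : 'I_n -> rat) (d : seq rat) : Prop :=
  exists e : seq rat, (forall m, R (nth 0 e m)) /\
    (forall i, c i = \sum_(m < size e) nth 0 e m * - k i m) /\
    (forall j : nat, nth 0 d j =
       \sum_(m < size e) nth 0 e m * ((j == m.+1)%:R * p m - (j == m)%:R)).

(* M is n-free-by-1 (n finite): M = B/N, expressed by an R-linear surjection
   B -> M (sending x_i to ex i, y_m to ey m) whose kernel is exactly N;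
   M not free; every submodule of rank <= n is free. *)
Definition n_free_by_1 R (M : RMod R) (n : nat) : Prop :=
  exists (p : nat -> rat) (k : 'I_n -> nat -> rat)
         (ex : 'I_n -> rm_car M) (ey : nat -> rm_car M),
    (forall m, R (p m) /\ p m != 0) /\ (forall i m, R (k i m)) /\
    let phi (c : 'I_n -> rat) (d : seq rat) : rm_car M :=
      \sum_i rm_act M (c i) (ex i) + \sum_(j < size d) rm_act M (nth 0 d j) (ey j) in
    (forall x : rm_car M, exists (c : 'I_n -> rat) (d : seq rat),
        (forall i, R (c i)) /\ (forall j, R (nth 0 d j)) /\ x = phi c d) /\
    (forall (c : 'I_n -> rat) (d : seq rat),
        (forall i, R (c i)) -> (forall j, R (nth 0 d j)) ->
        (phi c d = 0 <-> in_N R n p k c d)) /\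
    ~ free_Rmod R M /\
    (forall S, is_submod R M S -> rank_le R M n S -> free_on R M S).

Definition frf_by_1 R (M : RMod R) : Prop := exists n : nat, n_free_by_1 R M n.

Definition additive (A B : zmodType) (f : A -> B) : Prop :=
  forall a b, f (a + b) = f a + f b.

Definition Ext_zero (G L : zmodType) : Prop :=
  forall (X : zmodType) (i : L -> X) (pi : X -> G),
    additive L X i -> additive X G pi -> injective i -> (forall g, exists x, pi x = g) ->
    (forall x, pi x = 0 <-> exists l, i l = x) ->
    exists s : G -> X, additive G X s /\ forall g, pi (s g) = g.

Definition Phi_complete R (Phi : RMod R -> Prop) (L : RMod R) : Prop :=
  forall M, Phi M -> Ext_zero (rm_car M) (rm_car L).

Definition quot_iso R (G : RMod R) (A B : rm_car G -> Prop) (M : RMod R) : Prop :=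
  exists f : rm_car G -> rm_car M,
    (forall x y, B x -> B y -> f (x + y) = f x + f y) /\
    (forall r x, R r -> B x -> f (rm_act G r x) = rm_act M r (f x)) /\
    (forall m, exists x, B x /\ f x = m) /\
    (forall x, B x -> (f x = 0 <-> A x)).

(* G is Phi-represented: a continuous ascending chain (G_a)_{a < lambda} of
   submodules, lambda given as a well-ordered type (T, lt), G_0 = 0,
   G = union, successor quotients isomorphic to a member of Phi or free. *)
Definition Phi_represented R (Phi : RMod R -> Prop) (G : RMod R) : Prop :=
  exists (T : Type) (lt : T -> T -> Prop) (C : T -> rm_car G -> Prop),
    (forall a b c, lt a b -> lt b c -> lt a c) /\
    (forall a b, lt a b \/ a = b \/ lt b a) /\
    well_founded lt /\
    (forall a, is_submod R G (C a)) /\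
    (forall a b x, lt a b -> C a x -> C b x) /\
    (forall a, (forall b, ~ lt b a) -> forall x, C a x <-> x = 0) /\
    (forall a, (exists b, lt b a) ->
       (forall b, lt b a -> exists c, lt b c /\ lt c a) ->
       forall x, C a x <-> exists b, lt b a /\ C b x) /\
    (forall a b, lt a b -> (forall c, ~ (lt a c /\ lt c b)) ->
       exists M : RMod R, (Phi M \/ free_Rmod R M) /\ quot_iso R G (C a) (C b) M) /\
    (forall x, exists a, C a x).

(* Main.v *)
Require Import Defs.
From HB Require Import structures.
From mathcomp Require Import all_boot all_order all_algebra.
From mathcomp Require Import ring.
From Stdlib Require Import ClassicalEpsilon FunctionalExtensionality PropExtensionality ProofIrrelevance.
Set Implicit Arguments. Unset Strict Implicit. Unset Printing Implicit Defensive.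
Import Order.TTheory GRing.Theory Num.Theory.
Local Open Scope ring_scope.

Lemma add0f (A B : zmodType) (f : A -> B) : Defs.additive A B f -> f 0 = 0.
Proof. move=> h; have := h 0 0; rewrite addr0 => H; apply: (@addrI _ (f 0)); by rewrite -H addr0. Qed.
Lemma addNf (A B : zmodType) (f : A -> B) : Defs.additive A B f -> forall x, f (- x) = - f x.
Proof. move=> h x; apply/eqP; by rewrite -subr_eq0 opprK -h addNr (add0f h). Qed.
Lemma addBf (A B : zmodType) (f : A -> B) : Defs.additive A B f -> forall x y, f (x - y) = f x - f y.
Proof. move=> h x y; by rewrite h (addNf h). Qed.
Lemma addMnf (A B : zmodType) (f : A -> B) : Defs.additive A B f -> forall x n, f (x *+ n) = f x *+ n.
Proof. move=> h x; elim=> [|n IH]; first by rewrite !mulr0n add0f. by rewrite !mulrS h IH. Qed.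
Lemma addMzf (A B : zmodType) (f : A -> B) : Defs.additive A B f -> forall x (z : int), f (x *~ z) = f x *~ z.
Proof. move=> h x [n|n]; first by rewrite (addMnf h). by rewrite !NegzE !mulrNz (addNf h) (addMnf h). Qed.

Lemma sub0 R : is_subring_Q R -> R 0.
Proof. by move=> [h1 [hB _]]; have := hB _ _ h1 h1; rewrite subrr. Qed.
Lemma subN R r : is_subring_Q R -> R r -> R (- r).
Proof. move=> hR h; have := (proj1 (proj2 hR)) _ _ (sub0 hR) h; by rewrite sub0r. Qed.
Lemma subD R r s : is_subring_Q R -> R r -> R s -> R (r + s).
Proof. move=> hR h1 h2; have := (proj1 (proj2 hR)) _ _ h1 (subN hR h2); by rewrite opprK. Qed.
Lemma subM R r s : is_subring_Q R -> R r -> R s -> R (r * s).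
Proof. by move=> [_ [_ h]]; apply: h. Qed.
Lemma subnat R (n : nat) : is_subring_Q R -> R n%:R.
Proof. move=> hR; elim: n=> [|n IH]; first exact: sub0. rewrite -addn1 natrD; apply: subD=>//; exact: (proj1 hR). Qed.
Lemma subint R (z : int) : is_subring_Q R -> R z%:~R.
Proof. move=> hR; case: z=> n; first by rewrite -pmulrn; apply: subnat.
rewrite NegzE intrN; apply: (subN hR); rewrite -pmulrn; exact: (subnat _ hR). Qed.

Lemma act0 R M act : is_subring_Q R -> is_Rmod_act R M act -> forall x, act 0 x = 0.
Proof. move=> hR [_ [hD _]] x; have := hD 0 0 x (sub0 hR) (sub0 hR).
rewrite addr0 => H; apply: (@addrI _ (act 0 x)); by rewrite -H addr0. Qed.
Lemma actx0 R M act r : is_Rmod_act R M act -> R r -> act r 0 = 0.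
Proof. move=> [hA _] h; have := hA r 0 0 h; rewrite addr0 => H; apply: (@addrI _ (act r 0)); by rewrite -H addr0. Qed.
Lemma actNr R M act r x : is_subring_Q R -> is_Rmod_act R M act -> R r -> act (- r) x = - act r x.
Proof. move=> hR hA h; apply/eqP; rewrite -subr_eq0 opprK.
rewrite -(proj1 (proj2 hA)) //; [by rewrite addNr (act0 hR hA) | exact: subN hR h]. Qed.
Lemma actrB R M act r x y : is_Rmod_act R M act -> R r -> act r (x - y) = act r x - act r y.
Proof. move=> hA h; have hadd : Defs.additive M M (act r) by move=> a b; apply: (proj1 hA).
exact: addBf. Qed.
Lemma actint R M act (z : int) x : is_subring_Q R -> is_Rmod_act R M act -> act z%:~R x = x *~ z.
Proof. move=> hR hA.
have hn : forall n : nat, act n%:R x = x *+ n.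
  elim=> [|n IH]; first by rewrite (act0 hR hA).
  rewrite -addn1 natrD (proj1 (proj2 hA)); [by rewrite IH (proj2 (proj2 (proj2 hA))) addn1 mulrSr | exact: subnat _ hR | exact: proj1 hR].
case: z=> n; first by rewrite -pmulrn hn.
by rewrite NegzE intrN mulrNz (actNr _ hR hA) -?pmulrn ?hn //; apply: subnat. Qed.
Lemma actrMz R M act r x (z : int) : is_Rmod_act R M act -> R r -> act r (x *~ z) = act r x *~ z.
Proof. move=> hA h; have hadd : Defs.additive M M (act r) by move=> a b; apply: (proj1 hA).
exact: addMzf. Qed.

Record qdata := QData {
  qX : zmodType; qD : qX -> Prop; qK : qX -> Prop;
  qD0 : qD 0; qDB : forall x y, qD x -> qD y -> qD (x - y);
  qK0 : qK 0; qKB : forall x y, qK x -> qK y -> qK (x - y);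
  qKD : forall x, qK x -> qD x }.

Definition canon (q : qdata) (x : qX q) : qX q :=
  epsilon (inhabits 0) (fun y => @qK q (y - x)).

Lemma qKN q x : @qK q x -> @qK q (- x).
Proof. move=> h; rewrite -sub0r; apply: qKB=>//; exact: qK0. Qed.
Lemma qKA q x y : @qK q x -> @qK q y -> @qK q (x + y).
Proof. move=> h1 h2; rewrite -(opprK y); apply: qKB=>//; exact: qKN. Qed.
Lemma qDN q x : @qD q x -> @qD q (- x).
Proof. move=> h; rewrite -sub0r; apply: qDB=>//; exact: qD0. Qed.
Lemma qDA q x y : @qD q x -> @qD q y -> @qD q (x + y).
Proof. move=> h1 h2; rewrite -(opprK y); apply: qDB=>//; exact: qDN. Qed.

Lemma canon_spec q x : @qK q (canon x - x).
Proof. rewrite /canon; apply: (epsilon_spec (inhabits 0) (fun y => @qK q (y - x))).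
exists x; rewrite subrr; exact: qK0. Qed.

Lemma canon_eq q (x x' : qX q) : @qK q (x - x') -> canon x = canon x'.
Proof. move=> h; rewrite /canon; f_equal; apply: functional_extensionality => y.
apply: propositional_extensionality; split=> h2.
- have -> : y - x' = (y - x) + (x - x') by rewrite addrA subrK.
  exact: qKA.
- have -> : y - x = (y - x') - (x - x') by rewrite opprB addrA subrK.
  exact: qKB.
Qed.

Lemma canon_eqK q (x x' : qX q) : canon x = canon x' -> @qK q (x - x').
Proof. move=> e.
have -> : x - x' = (canon x' - x') - (canon x - x) by rewrite e opprB [_ + (x - _)]addrC addrA subrK.
apply: qKB; exact: canon_spec. Qed.

Lemma canon_idem q (x : qX q) : canon (canon x) = canon x.
Proof. apply: canon_eq; exact: canon_spec. Qed.

Lemma qD_canon q x : @qD q x -> @qD q (canon x).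
Proof. move=> h; rewrite -(subrK x (canon x)); apply: qDA=>//; apply: qKD; exact: canon_spec. Qed.

Definition pb (P : Prop) : bool := if excluded_middle_informative P then true else false.
Lemma pbP (P : Prop) : pb P <-> P.
Proof. rewrite /pb; case: excluded_middle_informative => //. Qed.

Definition qP (q : qdata) (x : qX q) : bool := pb (@qD q x /\ canon x = x).
Definition Yt (q : qdata) := {x : qX q | qP x}.

Lemma qP_canon q x : @qD q x -> qP (canon x).
Proof. move=> h; apply/pbP; split; [exact: qD_canon | exact: canon_idem]. Qed.

Definition y0 (q : qdata) : Yt q := exist _ (canon (0 : qX q)) (qP_canon (qD0 q)).
Definition Yin (q : qdata) (x : qX q) : Yt q := insubd (y0 q) (canon x).

Lemma val_Yin q x : @qD q x -> val (Yin x) = canon x.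
Proof. move=> h; rewrite /Yin insubdK //; exact: qP_canon. Qed.
Lemma Yval q (y : Yt q) : @qD q (val y) /\ canon (val y) = val y.
Proof. by case: y => x /= /pbP. Qed.
Lemma Yin_val q (y : Yt q) : Yin (val y) = y.
Proof. apply: val_inj; rewrite val_Yin; [exact: (proj2 (Yval y)) | exact: (proj1 (Yval y))]. Qed.

Ltac qd := repeat first [assumption | apply: qDA | apply: qD_canon | apply: qDN | apply: qD0].
Definition Yadd q (a b : Yt q) : Yt q := Yin (val a + val b).
Definition Yopp q (a : Yt q) : Yt q := Yin (- val a).

Lemma canon_addl q (x y : qX q) : canon (canon x + y) = canon (x + y).
Proof. apply: canon_eq; rewrite opprD addrACA subrr addr0; exact: canon_spec. Qed.
Lemma canon_addr q (x y : qX q) : canon (x + canon y) = canon (x + y).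
Proof. by rewrite addrC canon_addl addrC. Qed.

Lemma YaddA q : associative (@Yadd q).
Proof. move=> a b c; apply: val_inj; rewrite /Yadd.
have [Da Ca] := Yval a; have [Db Cb] := Yval b; have [Dc Cc] := Yval c.
rewrite !val_Yin; try by qd.
by rewrite canon_addl canon_addr addrA. Qed.
Lemma YaddC q : commutative (@Yadd q).
Proof. by move=> a b; rewrite /Yadd addrC. Qed.
Lemma Yadd0 q : left_id (y0 q) (@Yadd q).
Proof. move=> a; apply: val_inj; have [Da Ca] := Yval a; rewrite /Yadd val_Yin; last first.
  change (qD (canon 0 + val a)); by qd.
change (canon (canon 0 + val a) = val a). by rewrite canon_addl add0r. Qed.
Lemma YaddN q : left_inverse (y0 q) (@Yopp q) (@Yadd q).
Proof. move=> a; apply: val_inj; have [Da Ca] := Yval a; rewrite /Yadd /Yopp !val_Yin; try by qd.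
by rewrite canon_addl addNr. Qed.

HB.instance Definition _ (q : qdata) := Choice.copy (Yt q) {x : qX q | qP x}.
HB.instance Definition _ (q : qdata) := GRing.isZmodule.Build (Yt q) (@YaddA q) (@YaddC q) (@Yadd0 q) (@YaddN q).

Lemma Yin_add q x y : @qD q x -> @qD q y -> Yin (x + y) = (Yin x + Yin y : Yt q).
Proof. move=> hx hy; apply: val_inj; rewrite /GRing.add /= /Yadd (val_Yin (qDA hx hy)).
rewrite !val_Yin; try by qd. by rewrite canon_addl canon_addr. Qed.
Lemma Yin_eq q x y : Yin x = Yin y -> @qD q x -> @qD q y -> @qK q (x - y).
Proof. move=> e hx hy; apply: canon_eqK; by rewrite -(val_Yin hx) -(val_Yin hy) e. Qed.
Lemma Yin_K q x y : @qK q (x - y) -> Yin x = Yin y.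
Proof. move=> h; by rewrite /Yin (canon_eq h). Qed.
Lemma Y0E q : (0 : Yt q) = y0 q.
Proof. by []. Qed.


Lemma padd0 (A B : zmodType) (S : A -> Prop) (s : A -> B) : S 0 ->
  (forall x y, S x -> S y -> s (x + y) = s x + s y) -> s 0 = 0.
Proof. move=> h0 h; have := h 0 0 h0 h0; rewrite addr0 => H; apply: (@addrI _ (s 0)); by rewrite -H addr0. Qed.
Lemma paddB (A B : zmodType) (S : A -> Prop) (s : A -> B) :
  (forall x y, S x -> S y -> S (x - y)) ->
  (forall x y, S x -> S y -> s (x + y) = s x + s y) -> forall x y, S x -> S y -> s (x - y) = s x - s y.
Proof. move=> hB h x y hx hy; apply/eqP; rewrite eq_sym subr_eq -h ?subrK //; exact: hB. Qed.

Lemma submod0 R (G : RMod R) S : is_submod R G S -> S 0.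
Proof. by case. Qed.
Lemma submodA R (G : RMod R) S x y : is_submod R G S -> S x -> S y -> S (x + y).
Proof. by move=> [_ [h _]]; apply: h. Qed.
Lemma submodB R (G : RMod R) S x y : is_subring_Q R -> is_submod R G S -> S x -> S y -> S (x - y).
Proof. move=> hR hS hx hy; apply: (submodA hS hx).
have -> : - y = rm_act G (-1) y by rewrite (actNr y hR (rm_ax _ G)) ?(proj2 (proj2 (proj2 (rm_ax _ G)))) //; exact: proj1 hR.
apply: (proj2 (proj2 hS))=>//; apply: subN=>//; exact: proj1 hR. Qed.

Lemma val_add (q : qdata) (a b : Yt q) : val (a + b) = canon (val a + val b).
Proof. change (val (Yadd a b) = canon (val a + val b)); rewrite /Yadd val_Yin //.
have [Da _] := Yval a; have [Db _] := Yval b; by qd. Qed.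
Lemma val_0 (q : qdata) : val (0 : Yt q) = canon 0.
Proof. by []. Qed.


Lemma L1 (V:zmodType) (a b k x y : V) : a + b + k - (x + y) = (a - x) + (b - y) + k.
Proof. by rewrite addrAC opprD addrACA. Qed.
Lemma L2 (V:zmodType) (tx ty sk u v : V) : tx + ty + sk - (u + v + sk) = (tx - u) + (ty - v).
Proof. by rewrite opprD addrACA subrr addr0 opprD addrACA. Qed.
Lemma L3 (V:zmodType) (v w : V) : (v - w) - v = - w.
Proof. by rewrite addrAC subrr add0r. Qed.
Lemma L4 (V:zmodType) (a b : V) : a - (a - b) = b.
Proof. by rewrite opprB addrC subrK. Qed.

Lemma step_ext R (hR : is_subring_Q R) (G : RMod R) (L : zmodType) (M : RMod R)
  (X : zmodType) (i : L -> X) (pi : X -> rm_car G)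
  (hi : Defs.additive L X i) (hpi : Defs.additive X (rm_car G) pi) (iinj : injective i)
  (hex : forall x, pi x = 0 <-> exists l, i l = x)
  (hsurj : forall g, exists x, pi x = g)
  (Ca Cb : rm_car G -> Prop) (hCa : is_submod R G Ca) (hCb : is_submod R G Cb)
  (sub : forall x, Ca x -> Cb x)
  (hq : quot_iso R G Ca Cb M) (hE : Ext_zero (rm_car M) L)
  (s : rm_car G -> X) (sadd : forall x y, Ca x -> Ca y -> s (x + y) = s x + s y)
  (spi : forall x, Ca x -> pi (s x) = x) :
  exists s' : rm_car G -> X, (forall x y, Cb x -> Cb y -> s' (x + y) = s' x + s' y) /\
     (forall x, Cb x -> pi (s' x) = x) /\ (forall x, Ca x -> s' x = s x).
Proof.
have CaB : forall x y, Ca x -> Ca y -> Ca (x - y) by move=> x y; apply: submodB.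
have CbB : forall x y, Cb x -> Cb y -> Cb (x - y) by move=> x y; apply: submodB.
have Ca0 : Ca 0 := submod0 hCa.
have Cb0 : Cb 0 := submod0 hCb.
have s0 : s 0 = 0 := padd0 Ca0 sadd.
have sB := paddB CaB sadd.
have pi0 : pi 0 = 0 := add0f hpi.
have qD0' : Cb (pi 0) by rewrite pi0.
have qDB' : forall x y, Cb (pi x) -> Cb (pi y) -> Cb (pi (x - y)).
  by move=> x y h1 h2; rewrite (addBf hpi); apply: CbB.
have qK0' : (fun x => exists g, Ca g /\ x = s g) 0 by exists 0; rewrite s0.
have qKB' : forall x y, (fun x => exists g, Ca g /\ x = s g) x -> (fun x => exists g, Ca g /\ x = s g) y ->
   (fun x => exists g, Ca g /\ x = s g) (x - y).
  move=> x y [g [hg ->]] [h [hh ->]]; exists (g - h); split; [exact: CaB | by rewrite sB].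
have qKD' : forall x, (fun x => exists g, Ca g /\ x = s g) x -> Cb (pi x).
  by move=> x [g [hg ->]]; rewrite spi //; exact: sub.
pose q := QData qD0' qDB' qK0' qKB' qKD'.
case: hq => f [fadd [_ [fsurj fker]]].
have f0 : f 0 = 0 := padd0 Cb0 fadd.
have fB := paddB CbB fadd.
have fcanon : forall x : qX q, Cb (pi x) -> f (pi (canon x)) = f (pi x).
  move=> x hx; have [g [hg e]] := canon_spec x.
  have -> : canon x = x + s g by rewrite -e addrC subrK.
  rewrite hpi spi // fadd //; last exact: sub.
  by rewrite (proj2 (fker g (sub _ hg)) hg) addr0.
have piI : forall l, pi (i l) = 0 by move=> l; apply/hex; exists l.
pose i' := fun l => Yin (i l : qX q).
pose pi' := fun y : Yt q => f (pi (val y)).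
have hDi : forall l, @qD q (i l) by move=> l; change (Cb (pi (i l))); rewrite piI.
have [sig [sigadd sigpi]] : exists sig : rm_car M -> Yt q, Defs.additive _ _ sig /\ forall m, pi' (sig m) = m.
  apply: (hE (Yt q) i' pi').
  - by move=> a b; rewrite /i' hi Yin_add.
  - move=> a b; rewrite /pi' val_add fcanon; last first.
      have [Da _] := Yval a; have [Db _] := Yval b; change (@qD q (val a + val b)); by qd.
    have [Da _] := Yval a; have [Db _] := Yval b.
    by rewrite hpi fadd.
  - move=> a b e; have := Yin_eq e (hDi a) (hDi b) => -[g [hg ee]].
    have gz : g = 0 by rewrite -(spi _ hg) -ee (addBf hpi) !piI subrr.
    by move: ee; rewrite gz s0 -(addBf hi) -(add0f hi) => /iinj /eqP; rewrite subr_eq0 => /eqP.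
  - move=> m; have [g [hg <-]] := fsurj m; have [x hx] := hsurj g.
    have hx' : @qD q x by change (Cb (pi x)); rewrite hx.
    exists (Yin (x : qX q)); rewrite /pi' val_Yin // fcanon; by rewrite hx.
  - move=> y; split.
    + rewrite /pi' => h0; have [Dy Cy] := Yval y.
      have hCa' : Ca (pi (val y)) by apply/(fker _ Dy).
      have : pi (val y - s (pi (val y))) = 0 by rewrite (addBf hpi) spi // subrr.
      move/hex => [l hl]; exists l; rewrite /i' hl.
      rewrite -[RHS](Yin_val y); apply: Yin_K.
      exists (0 - pi (val y)); split; first exact: CaB.
      by rewrite sB // s0 sub0r L3.
    + move=> [l <-]; rewrite /pi' /i' val_Yin ?hDi // fcanon ?piI //; exact: hDi.
pose t := fun g => val (sig (f g)).
have tD : forall g, Cb (pi (t g)) := fun g => proj1 (Yval (sig (f g))).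
have tf : forall g, f (pi (t g)) = f g := fun g => sigpi (f g).
have tCa : forall g, Cb g -> Ca (pi (t g) - g).
  by move=> g hg; apply/(fker _ (CbB _ _ (tD g) hg)); rewrite fB // tf subrr.
exists (fun g => t g - s (pi (t g) - g)); split; [|split].
- move=> x y hx hy.
  have e1 : t (x + y) = canon (t x + t y : qX q) by rewrite /t fadd // sigadd val_add.
  have [k [hk ek]] := canon_spec (t x + t y : qX q).
  have e2 : t (x + y) = t x + t y + s k by rewrite e1 -ek [_ + (_ - _)]addrC subrK.
  rewrite e2 !hpi (spi _ hk) L1.
  have ha := tCa _ hx; have hb := tCa _ hy.
  rewrite (sadd _ _ (submodA hCa ha hb) hk) (sadd _ _ ha hb).
  exact: L2.
- move=> g hg; rewrite (addBf hpi) spi ?L4 //; exact: tCa.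
- move=> g hg; have fg : f g = 0 by apply/(fker _ (sub _ hg)).
  rewrite /t fg (add0f sigadd) val_0.
  have [k [hk ek]] := canon_spec (0 : qX q); move: ek; rewrite subr0 => ->.
  by rewrite spi // sB // L4.
Qed.


Lemma eklof R (hR : is_subring_Q R) (G : RMod R) (L : zmodType)
  (T : Type) (lt : T -> T -> Prop) (C : T -> rm_car G -> Prop)
  (htrans : forall a b c, lt a b -> lt b c -> lt a c)
  (htri : forall a b, lt a b \/ a = b \/ lt b a)
  (hwf : well_founded lt)
  (hsub : forall a, is_submod R G (C a))
  (hmono : forall a b x, lt a b -> C a x -> C b x)
  (hmin : forall a, (forall b, ~ lt b a) -> forall x, C a x <-> x = 0)
  (hlim : forall a, (exists b, lt b a) ->
       (forall b, lt b a -> exists c, lt b c /\ lt c a) ->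
       forall x, C a x <-> exists b, lt b a /\ C b x)
  (hsucc : forall a b, lt a b -> (forall c, ~ (lt a c /\ lt c b)) ->
       exists M : RMod R, Ext_zero (rm_car M) L /\ quot_iso R G (C a) (C b) M)
  (hcov : forall x, exists a, C a x) :
  Ext_zero (rm_car G) L.
Proof.
move=> X i pi hi hpi iinj hsurj hex.
pose Pext := fun (b a : T) (s s' : rm_car G -> X) =>
  (forall x y, C a x -> C a y -> s' (x + y) = s' x + s' y) /\ (forall x, C a x -> pi (s' x) = x) /\
  (forall x, C b x -> s' x = s x).
pose ext_choice := fun (b a : T) (s : rm_car G -> X) =>
  match excluded_middle_informative (exists s', Pext b a s s') with
  | left H => proj1_sig (constructive_indefinite_description _ H)
  | right _ => s end.
pose step := fun (a : T) (rec : forall b, lt b a -> rm_car G -> X) =>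
  match excluded_middle_informative (exists b, lt b a /\ forall c, ~ (lt b c /\ lt c a)) with
  | left H => let bp := constructive_indefinite_description _ H in
              ext_choice (proj1_sig bp) a (rec (proj1_sig bp) (proj1 (proj2_sig bp)))
  | right _ => fun g => match excluded_middle_informative (exists b, lt b a /\ C b g) with
      | left H2 => let bp := constructive_indefinite_description _ H2 in
                   rec (proj1_sig bp) (proj1 (proj2_sig bp)) g
      | right _ => 0 end end.
pose S := Fix hwf (fun _ => rm_car G -> X) step.
have S_eq : forall a, S a = step a (fun b _ => S b).
  move=> a; rewrite /S Fix_eq //.
  move=> x f g hfg; have -> // : f = g.
  apply: functional_extensionality_dep => y; apply: functional_extensionality_dep => p; exact: hfg.
clearbody S.
pose Inv := fun a => ((forall x y, C a x -> C a y -> S a (x + y) = S a x + S a y) /\ (forall x, C a x -> pi (S a x) = x)) /\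
  (forall c, lt c a -> forall g, C c g -> S a g = S c g).
have coh : forall b b', Inv b -> Inv b' -> forall g, C b g -> C b' g -> S b g = S b' g.
  move=> b b' Ib Ib' g hb hb'; case: (htri b b') => [h|[<-|h]] //.
  - by rewrite (proj2 Ib' _ h).
  - by rewrite (proj2 Ib _ h).
have S_succ : forall a, (exists b, lt b a /\ forall c, ~ (lt b c /\ lt c a)) ->
    exists b, (lt b a /\ forall c, ~ (lt b c /\ lt c a)) /\ S a = ext_choice b a (S b).
  move=> a H; rewrite S_eq /step; case: excluded_middle_informative => [H'|//].
  case: (constructive_indefinite_description _ H') => b hb /=; by exists b.
have S_lim : forall a, ~ (exists b, lt b a /\ forall c, ~ (lt b c /\ lt c a)) ->
    (forall b', lt b' a -> Inv b') -> forall b g, lt b a -> C b g -> S a g = S b g.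
  move=> a nH IH b g hb hg; rewrite S_eq /step; case: excluded_middle_informative => [//|_] /=.
  case: excluded_middle_informative => [H2|nH2]; last by exfalso; apply: nH2; exists b.
  destruct (constructive_indefinite_description _ H2) as [b' [hb' hb'g]]; simpl.
  exact: coh (IH _ hb') (IH _ hb) _ hb'g hg.
have S_min : forall a, ~ (exists b, lt b a /\ forall c, ~ (lt b c /\ lt c a)) ->
    ~ (exists b, lt b a) -> forall g, S a g = 0.
  move=> a nH nb g; rewrite S_eq /step; case: excluded_middle_informative => [//|_] /=.
  case: excluded_middle_informative => [H2|//]; exfalso; case: H2 => b [hb _]; apply: nb; by exists b.
have Iall : forall a, Inv a.
  apply: (well_founded_ind hwf) => a IH; rewrite /Inv.
  case: (excluded_middle_informative (exists b, lt b a /\ forall c, ~ (lt b c /\ lt c a))) => [H|nH].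
  - have [b [[hba hbimm] ->]] := S_succ a H.
    have Ib := IH b hba.
    have [M [hE hq]] := hsucc b a hba hbimm.
    have hex' : exists s', Pext b a (S b) s'.
      apply: (step_ext hR hi hpi iinj hex hsurj (hsub b) (hsub a) _ hq hE (proj1 (proj1 Ib)) (proj2 (proj1 Ib))).
      by move=> x; apply: hmono.
    rewrite /ext_choice; case: excluded_middle_informative => [H2|nH2]; last by exfalso; apply: nH2.
    case: (constructive_indefinite_description _ H2) => s' [P1 [P2 P3]] /=.
    split; first by split.
    move=> c hc g hg; case: (htri c b) => [h|[e|h]].
    + have hb : C b g := hmono _ _ _ h hg.
      by rewrite (P3 _ hb) (proj2 Ib _ h).
    + subst c; exact: P3.
    + by exfalso; apply: (hbimm c).
  - case: (excluded_middle_informative (exists b, lt b a)) => [hA|nA].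
    + have hL : forall b, lt b a -> exists c, lt b c /\ lt c a.
        move=> b hb; apply: NNPP => hn; apply: nH; exists b; split=>// c [h1 h2]; apply: hn; by exists c.
      have hC := hlim a hA hL.
      have SL := S_lim a nH IH.
      have up : forall x y, C a x -> C a y -> exists m, lt m a /\ C m x /\ C m y.
        move=> x y /hC [b1 [h1 hx]] /hC [b2 [h2 hy]]; case: (htri b1 b2) => [h|[e|h]].
        * exists b2; split=>//; split=>//; exact: hmono hx.
        * subst; by exists b2.
        * exists b1; split=>//; split=>//; exact: hmono hy.
      split; first split.
      * move=> x y hx hy; have [m [hm [hmx hmy]]] := up _ _ hx hy.
        rewrite !(SL m) //; last exact: submodA.
        exact: (proj1 (proj1 (IH m hm))).
      * move=> x /hC [b [hb hx]]; rewrite (SL b) //; exact: (proj2 (proj1 (IH b hb))).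
      * by move=> c hc g hg; apply: SL.
    + have hC := hmin a (fun b hb => nA (ex_intro _ b hb)).
      have S0 := S_min a nH nA.
      split; first split.
      * by move=> x y /hC -> /hC ->; rewrite !S0 addr0.
      * by move=> x /hC ->; rewrite S0 (add0f hpi).
      * by move=> c hc; exfalso; apply: nA; exists c.
pose sa := fun g => proj1_sig (constructive_indefinite_description _ (hcov g)).
have hsa : forall g, C (sa g) g := fun g => proj2_sig (constructive_indefinite_description _ (hcov g)).
have up : forall a b, exists m, (forall g, C a g -> C m g) /\ (forall g, C b g -> C m g).
  move=> a b; case: (htri a b) => [h|[<-|h]].
  - exists b; split=>// g; exact: hmono.
  - by exists a.
  - exists a; split=>// g; exact: hmono.
exists (fun g => S (sa g) g); split.
- move=> x y /=; have [m [h1 h2]] := up (sa x) (sa y).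
  have hmx := h1 _ (hsa x); have hmy := h2 _ (hsa y).
  rewrite (coh _ _ (Iall _) (Iall m) _ (hsa (x + y)) (submodA (hsub m) hmx hmy)).
  rewrite (coh _ _ (Iall _) (Iall m) _ (hsa x) hmx) (coh _ _ (Iall _) (Iall m) _ (hsa y) hmy).
  exact: (proj1 (proj1 (Iall m))).
- move=> g /=; exact: (proj2 (proj1 (Iall _))).
Qed.


Definition group (K : eqType) (l : seq (K * rat)) : seq (K * rat) :=
  [seq (b, \sum_(p <- l | p.1 == b) p.2) | b <- undup (map fst l)].

Lemma sum_if_uniq (K : eqType) (V : zmodType) (u : seq K) (x : K) (c : V) :
  uniq u -> x \in u -> \sum_(b <- u) (if x == b then c else 0) = c.
Proof.
elim: u => [//|b u IH] /= /andP [bu uu]; rewrite in_cons big_cons.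
case: eqP => [e _|ne /= xu].
- rewrite big1_seq ?addr0 // => b' /andP [_ hb']; case: eqP => // e'; by move: bu; rewrite -e e' hb'.
- by rewrite add0r IH.
Qed.

Lemma group_sum (K : eqType) (V : zmodType) (P : rat -> Prop) (F : K -> rat -> V) (l : seq (K * rat)) :
  P 0 -> (forall r s, P r -> P s -> P (r + s)) ->
  (forall b r s, P r -> P s -> F b (r + s) = F b r + F b s) ->
  (forall p, p \in l -> P p.2) ->
  \sum_(p <- l) F p.1 p.2 = \sum_(p <- group l) F p.1 p.2.
Proof.
move=> P0 PD FD Pl.
have F0 : forall b, F b 0 = 0.
  move=> b; have := FD b 0 0 P0 P0; rewrite addr0 => H; apply: (@addrI _ (F b 0)); by rewrite -H addr0.
have Fsum : forall b (Q : pred (K * rat)), F b (\sum_(p <- l | Q p) p.2) = \sum_(p <- l | Q p) F b p.2.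
  move=> b Q; elim: l Pl => [|p l IH] Pl; first by rewrite !big_nil F0.
  rewrite !big_cons; case: (Q p); last by apply: IH => q hq; apply: Pl; rewrite in_cons hq orbT.
  rewrite FD ?IH //.
  + by move=> q hq; apply: Pl; rewrite in_cons hq orbT.
  + by apply: Pl; rewrite in_cons eqxx.
  + rewrite big_seq_cond; apply: (big_ind P) => // q /andP [hq _]; apply: Pl; by rewrite in_cons hq orbT.
rewrite /group big_map /=.
have -> : \sum_(b <- undup [seq i.1 | i <- l]) F b (\sum_(p <- l | p.1 == b) p.2) =
          \sum_(b <- undup [seq i.1 | i <- l]) \sum_(p <- l) (if p.1 == b then F p.1 p.2 else 0).
  apply: eq_bigr => b _; rewrite (Fsum b (fun p => p.1 == b)) big_mkcond; apply: eq_bigr => p _; by case: eqP => // ->.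
rewrite exchange_big /= big_seq [RHS]big_seq; apply: eq_bigr => p pl.
rewrite sum_if_uniq ?undup_uniq // mem_undup; apply/mapP; by exists p.
Qed.

Lemma group_uniq (K : eqType) (l : seq (K * rat)) : uniq (map fst (group l)).
Proof. rewrite /group -map_comp map_id_in ?undup_uniq //. Qed.

Lemma group_key (K : eqType) (l : seq (K * rat)) p : p \in group l -> exists q, q \in l /\ q.1 = p.1.
Proof. rewrite /group => /mapP [b]; rewrite mem_undup => /mapP [q ql ->] ->; by exists q. Qed.

Lemma group_coef (K : eqType) (P : rat -> Prop) (l : seq (K * rat)) p :
  P 0 -> (forall r s, P r -> P s -> P (r + s)) -> (forall q, q \in l -> P q.2) ->
  p \in group l -> P p.2.
Proof. move=> P0 PD Pl; rewrite /group => /mapP [b _ ->] /=.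
rewrite big_seq_cond; apply: (big_ind P) => // q /andP [hq _]; exact: Pl. Qed.


Lemma sumN (I : Type) (V : zmodType) (l : seq I) (F : I -> V) : \sum_(p <- l) - F p = - \sum_(p <- l) F p.
Proof. elim: l => [|a l IH]; first by rewrite !big_nil oppr0. by rewrite !big_cons IH opprD. Qed.

Lemma free_ext R (hR : is_subring_Q R) (M L : RMod R) (hLtf : torsion_free (rm_car L))
  (hfree : free_Rmod R M) : Ext_zero (rm_car M) (rm_car L).
Proof.
move=> X i pi hi hpi iinj hsurj hex.
have hA := rm_ax _ M; have hAL := rm_ax _ L.
have piI : forall l, pi (i l) = 0 by move=> l; apply/hex; exists l.
have U : forall (z z' : X) (d : int), 0 < d -> pi z = pi z' -> z *~ d = z' *~ d -> z = z'.
  move=> z z' [n|n] // hn e1; rewrite -!pmulrn => e2.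
  have : pi (z - z') = 0 by rewrite (addBf hpi) e1 subrr.
  move/hex => [l hl].
  have : i (l *+ n) = i 0 by rewrite (addMnf hi) hl mulrnBl e2 subrr (add0f hi).
  move/iinj; case: n hn {e2} => // n _ /hLtf l0.
  by apply/eqP; rewrite -subr_eq0 -hl l0 (add0f hi).
pose xb := fun m => proj1_sig (constructive_indefinite_description _ (hsurj m)).
have hxb : forall m, pi (xb m) = m := fun m => proj2_sig (constructive_indefinite_description _ (hsurj m)).
have Rinvd : forall r, R r -> R ((denq r)%:~R^-1).
  move=> r hr; case: (Bezoutz (numq r) (denq r)) => a [c e].
  have g1 : gcdz (numq r) (denq r) = 1 by rewrite /gcdz; have := coprime_num_den r; rewrite /coprime => /eqP ->.
  have hd : (denq r)%:~R != 0 :> rat by rewrite intr_eq0 denq_neq0.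
  have e' : (a%:~R * r + c%:~R) * (denq r)%:~R = 1 :> rat.
    rewrite mulrDl -mulrA -numqE -!intrM -intrD e g1 //.
  have -> : (denq r)%:~R^-1 = a%:~R * r + c%:~R :> rat.
    by apply: (mulIf hd); rewrite mulVf // e'.
  apply: subD=>//; [apply: subM=>//; exact: subint | exact: subint].
have phiex : forall b r, R r -> exists y, pi y = rm_act M r b /\ y *~ denq r = xb b *~ numq r.
  move=> b r hr; have [y0 hy0] := hsurj (rm_act M r b).
  have : pi (y0 *~ denq r - xb b *~ numq r) = 0.
    rewrite (addBf hpi) !(addMzf hpi) hy0 hxb.
    rewrite -(actrMz _ _ hA hr) -(actint _ _ hR hA) -(proj1 (proj2 (proj2 hA)) r (denq r)%:~R b hr (subint _ hR)).
    by rewrite -numqE (actint _ _ hR hA) subrr.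
  move/hex => [l hl].
  exists (y0 - i (rm_act L ((denq r)%:~R^-1) l)); split.
    by rewrite (addBf hpi) piI subr0.
  rewrite mulrzBl -(addMzf hi) -(actint _ _ hR hAL) -(proj1 (proj2 (proj2 hAL)) _ _ _ (subint _ hR) (Rinvd _ hr)).
  rewrite mulfV ?intr_eq0 ?denq_neq0 // (proj2 (proj2 (proj2 hAL))) hl.
  exact: L4.
pose phi := fun b r => match excluded_middle_informative
   (exists y, pi y = rm_act M r b /\ y *~ denq r = xb b *~ numq r) with
   | left H => proj1_sig (constructive_indefinite_description _ H) | right _ => 0 end.
have phis : forall b r, R r -> pi (phi b r) = rm_act M r b /\ phi b r *~ denq r = xb b *~ numq r.
  move=> b r hr; rewrite /phi; case: excluded_middle_informative => [H|nH].
  - exact: proj2_sig (constructive_indefinite_description _ H).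
  - by exfalso; apply: nH; apply: phiex.
have mulsp : forall b r (k : int), R r -> phi b r *~ (denq r * k) = xb b *~ (numq r * k).
  by move=> b r k hr; rewrite !mulrzA (proj2 (phis b r hr)).
have phiD : forall b r s, R r -> R s -> phi b (r + s) = phi b r + phi b s.
  move=> b r s hr hs; have hrs := subD hR hr hs.
  apply: (U _ _ (denq r * denq s * denq (r + s))).
  - by rewrite !mulr_gt0 ?denq_gt0.
  - by rewrite hpi (proj1 (phis _ _ hrs)) (proj1 (phis _ _ hr)) (proj1 (phis _ _ hs)) (proj1 (proj2 hA)).
  - have -> : denq r * denq s * denq (r + s) = denq (r + s) * (denq r * denq s) by ring.
    rewrite mulsp // mulrzDl.
    have -> : denq (r + s) * (denq r * denq s) = denq r * (denq s * denq (r + s)) by ring.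
    rewrite mulsp //.
    have -> : denq r * (denq s * denq (r + s)) = denq s * (denq r * denq (r + s)) by ring.
    rewrite mulsp // -mulrzDr; congr (_ *~ _).
    apply: (@intr_inj rat); rewrite !(intrD, intrM) !numqE; ring.
have phi0 : forall b, phi b 0 = 0.
  move=> b; have := phiD b 0 0 (sub0 hR) (sub0 hR); rewrite addr0 => H.
  apply: (@addrI _ (phi b 0)); by rewrite -H addr0.
have phiN : forall b r, R r -> phi b (- r) = - phi b r.
  move=> b r hr; apply/eqP; by rewrite -subr_eq0 opprK -(phiD b (- r) r (subN hR hr) hr) addNr phi0.
case: hfree => Bs [_ [span indep]].
pose valid := fun l : seq (rm_car M * rat) => forall p, p \in l -> Bs p.1 /\ R p.2.
pose W := fun l : seq (rm_car M * rat) => \sum_(p <- l) phi p.1 p.2.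
have Wwd : forall l l', valid l -> valid l' -> lincomb R M l = lincomb R M l' -> W l = W l'.
  move=> l l' vl vl' e.
  pose l2 := l ++ map (fun p => (p.1, - p.2)) l'.
  have vl2 : valid l2.
    move=> p; rewrite mem_cat => /orP [h|/mapP [q hq ->]]; first exact: vl.
    have [h1 h2] := vl' q hq; split=>//; exact: subN.
  have Wl2 : W l2 = W l - W l'.
    rewrite /W big_cat big_map /= -sumN; congr (_ + _).
    rewrite big_seq [RHS]big_seq; apply: eq_bigr => p hp; apply: phiN; exact: (proj2 (vl' p hp)).
  have Ll2 : lincomb R M l2 = 0.
    rewrite /lincomb big_cat big_map /=.
    have -> : \sum_(j <- l') rm_act M (- j.2) j.1 = - \sum_(j <- l') rm_act M j.2 j.1.
      rewrite -sumN big_seq [RHS]big_seq; apply: eq_bigr => p hp.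
      exact: (actNr _ hR hA (proj2 (vl' p hp))).
    by have := e; rewrite /lincomb => ->; rewrite subrr.
  have R2 : forall p, p \in l2 -> R p.2 by move=> p /vl2 [].
  have RD : forall r s, R r -> R s -> R (r + s) by move=> r s; apply: subD.
  have gW : W l2 = W (group l2).
    apply: (group_sum (P := R)); [exact: sub0 | exact: RD | move=> b r s; exact: phiD | exact: R2].
  have gL : lincomb R M l2 = lincomb R M (group l2).
    apply: (group_sum (P := R) (F := fun b r => rm_act M r b)); [exact: sub0 | exact: RD | | exact: R2].
    move=> b r s hr hs; exact: (proj1 (proj2 hA)).
  have vg : valid (group l2).
    move=> p hp; split.
    - have [q [hq e1]] := group_key hp; rewrite -e1; exact: (proj1 (vl2 q hq)).
    - apply: (group_coef (P := R) _ _ R2 hp) => //; exact: sub0.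
  have z := indep (group l2) vg (group_uniq l2) (esym (etrans (esym Ll2) gL)).
  have W0 : W (group l2) = 0.
    rewrite /W big_seq big1 // => p hp; by rewrite (z p hp) phi0.
  apply: subr0_eq; by rewrite -Wl2 gW.
pose lm := fun m => proj1_sig (constructive_indefinite_description _ (span m I)).
have hlm : forall m, valid (lm m) /\ m = lincomb R M (lm m) :=
  fun m => proj2_sig (constructive_indefinite_description _ (span m I)).
exists (fun m => W (lm m)); split.
- move=> x y /=; rewrite (Wwd (lm (x + y)) (lm x ++ lm y)).
  + by rewrite /W big_cat.
  + exact: (proj1 (hlm _)).
  + move=> p; rewrite mem_cat => /orP [] h; [exact: (proj1 (hlm x)) | exact: (proj1 (hlm y))].
  + rewrite -(proj2 (hlm (x + y))) {1}(proj2 (hlm x)) {1}(proj2 (hlm y)).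
    by rewrite /lincomb big_cat.
- move=> m /=; rewrite {2}(proj2 (hlm m)) /W /lincomb (big_morph pi hpi (add0f hpi)).
  rewrite big_seq [RHS]big_seq; apply: eq_bigr => p hp.
  exact: (proj1 (phis _ _ (proj2 (proj1 (hlm m) p hp)))).
Qed.


Theorem theorem5p2 (R : rat -> Prop) (hR : is_subring_Q R)
  (Phi : RMod R -> Prop) (hPhi : forall M, Phi M -> frf_by_1 R M)
  (L G : RMod R)
  (hLtf : torsion_free (rm_car L)) (hGtf : torsion_free (rm_car G))
  (hLnuc : has_nucleus R (rm_car L)) (hGnuc : has_nucleus R (rm_car G))
  (hL : Phi_complete R Phi L) (hG : Phi_represented R Phi G) :
  Ext_zero (rm_car G) (rm_car L).
Proof.
case: hG => T [lt [C [htrans [htri [hwf [hsub [hmono [hmin [hlim [hsucc hcov]]]]]]]]]].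
apply: (eklof hR htrans htri hwf hsub hmono hmin hlim _ hcov).
move=> a b hab himm; have [M [hM hq]] := hsucc a b hab himm.
exists M; split=>//; case: hM => hM; [exact: hL | exact: free_ext].
Qed.
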